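(* Let $\bar{\boldsymbol{W}}^{\star},\bar{\boldsymbol{S}}^{\star}\in\mathbb{C}^{L\times L}$ be an optimal solution of problem (SDR2) defined in the context, and assume $\bar{\boldsymbol{g}}_0^H\bar{\boldsymbol{W}}^{\star}\bar{\boldsymbol{g}}_0>0$. Define $$\bar{\boldsymbol{W}}^{\mathrm{opt}}=\frac{\bar{\boldsymbol{W}}^{\star}\bar{\boldsymbol{g}}_0\bar{\boldsymbol{g}}_0^H\bar{\boldsymbol{W}}^{\star}}{\bar{\boldsymbol{g}}_0^H\bar{\boldsymbol{W}}^{\star}\bar{\boldsymbol{g}}_0},\qquad \bar{\boldsymbol{S}}^{\mathrm{opt}}=\bar{\boldsymbol{W}}^{\star}+\bar{\boldsymbol{S}}^{\star}-\bar{\boldsymbol{W}}^{\mathrm{opt}}.$$ Then $\mathrm{rank}(\bar{\boldsymbol{W}}^{\mathrm{opt}})=1$, the pair $(\bar{\boldsymbol{W}}^{\mathrm{opt}},\bar{\boldsymbol{S}}^{\mathrm{opt}})$ is feasible for (P2) (in particular $\bar{\boldsymbol{S}}^{\mathrm{opt}}\succeq\boldsymbol{0}$), and $R(\bar{\boldsymbol{W}}^{\mathrm{opt}},\bar{\boldsymbol{S}}^{\mathrm{opt}})=R(\bar{\boldsymbol{W}}^{\star},\bar{\boldsymbol{S}}^{\star})$. Consequently the optimal values of (SDR2) and (P2) coincide and $(\bar{\boldsymbol{W}}^{\mathrm{opt}},\bar{\boldsymbol{S}}^{\mathrm{opt}})$ is an optimal solution of (P2).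
   Context: Fix integers $N\ge L\ge1$, $K\ge1$, a matrix $\boldsymbol{U}\in\mathbb{C}^{N\times L}$ with orthonormal columns, vectors $\bar{\boldsymbol{g}}_0,\bar{\boldsymbol{g}}_1,\dots,\bar{\boldsymbol{g}}_{K+1}\in\mathbb{C}^{L}$, noise powers $\sigma_0^2,\sigma_1^2,\dots,\sigma_{K+1}^2>0$, $\sigma_s^2>0$, a complex number $\beta_s\neq0$, an integer $T\ge1$, thresholds $\Gamma_\theta,\Gamma_r>0$, $Q\ge0$, $P>0$, and $0<\zeta\le1$. Let $\mathcal{K}_{\mathrm{ER}}=\{1,\dots,K\}$ and $\mathcal{K}_{\mathrm{EAV}}=\{1,\dots,K+1\}$. Let $\boldsymbol{A},\dot{\boldsymbol{A}}_\theta,\dot{\boldsymbol{A}}_r\in\mathbb{C}^{N\times N}$ be given matrices (in the paper, $\boldsymbol{A}=\boldsymbol{a}\boldsymbol{a}^T$ for the near-field steering vector $\boldsymbol{a}$ of the target and $\dot{\boldsymbol{A}}_\theta,\dot{\boldsymbol{A}}_r$ its partial derivatives with respect to target angle and range). For Hermitian $\bar{\boldsymbol{W}},\bar{\boldsymbol{S}}\in\mathbb{C}^{L\times L}$ set $\boldsymbol{R}_x=\boldsymbol{U}(\bar{\boldsymbol{W}}+\bar{\boldsymbol{S}})\boldsymbol{U}^H$ and, for $\dot{\boldsymbol{A}}\in\{\dot{\boldsymbol{A}}_\theta,\dot{\boldsymbol{A}}_r\}$, $$\mathrm{CRB}_{\dot{\boldsymbol{A}}}(\bar{\boldsymbol{W}},\bar{\boldsymbol{S}})=\frac{\sigma_s^2}{2|\beta_s|^2T}\cdot\frac{\mathrm{tr}(\boldsymbol{A}\boldsymbol{R}_x\boldsymbol{A}^H)}{\mathrm{tr}(\dot{\boldsymbol{A}}\boldsymbol{R}_x\dot{\boldsymbol{A}}^H)\,\mathrm{tr}(\boldsymbol{A}\boldsymbol{R}_x\boldsymbol{A}^H)-|\mathrm{tr}(\boldsymbol{A}\boldsymbol{R}_x\dot{\boldsymbol{A}}^H)|^2}$$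 (the CRBs for angle and range are $\mathrm{CRB}_{\dot{\boldsymbol{A}}_\theta}$ and $\mathrm{CRB}_{\dot{\boldsymbol{A}}_r}$). Define the SINRs $\gamma_k(\bar{\boldsymbol{W}},\bar{\boldsymbol{S}})=\dfrac{\bar{\boldsymbol{g}}_k^H\bar{\boldsymbol{W}}\bar{\boldsymbol{g}}_k}{\bar{\boldsymbol{g}}_k^H\bar{\boldsymbol{S}}\bar{\boldsymbol{g}}_k+\sigma_k^2}$ for $k=0,1,\dots,K+1$, and the secrecy rate $$R(\bar{\boldsymbol{W}},\bar{\boldsymbol{S}})=\min_{k\in\mathcal{K}_{\mathrm{EAV}}}\Big(\log_2(1+\gamma_0(\bar{\boldsymbol{W}},\bar{\boldsymbol{S}}))-\log_2(1+\gamma_k(\bar{\boldsymbol{W}},\bar{\boldsymbol{S}}))\Big)^+,$$ where $(x)^+=\max(x,0)$. Problem (P2) is: maximize $R(\bar{\boldsymbol{W}},\bar{\boldsymbol{S}})$ over Hermitian $\bar{\boldsymbol{W}},\bar{\boldsymbol{S}}\in\mathbb{C}^{L\times L}$ subject to (i) $\mathrm{CRB}_{\dot{\boldsymbol{A}}_\theta}(\bar{\boldsymbol{W}},\bar{\boldsymbol{S}})\le\Gamma_\theta$ and $\mathrm{CRB}_{\dot{\boldsymbol{A}}_r}(\bar{\boldsymbol{W}},\bar{\boldsymbol{S}})\le\Gamma_r$ (with the denominators required to be positive); (ii) $\zeta\bar{\boldsymbol{g}}_k^H(\bar{\boldsymbol{W}}+\bar{\boldsymbol{S}})\bar{\boldsymbol{g}}_k\ge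 Q$ for all $k\in\mathcal{K}_{\mathrm{ER}}$; (iii) $\mathrm{Tr}(\bar{\boldsymbol{W}}+\bar{\boldsymbol{S}})\le P$; (iv) $\bar{\boldsymbol{W}}\succeq\boldsymbol{0}$, $\bar{\boldsymbol{S}}\succeq\boldsymbol{0}$; (v) $\mathrm{rank}(\bar{\boldsymbol{W}})\le1$. Problem (SDR2) is the same problem with constraint (v) removed. *)

(* Defs.v *)
From HB Require Import structures.
From mathcomp Require Import all_boot all_order all_algebra.
From mathcomp Require Import complex.
From mathcomp Require Import reals exp.
Set Implicit Arguments. Unset Strict Implicit. Unset Printing Implicit Defensive.
Import Order.TTheory GRing.Theory Num.Theory.
Local Open Scope ring_scope.
Local Open Scope complex_scope.

Section Defs.
Variable R : realType.
Local Notation C := R[i].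

Definition adjm m n (M : 'M[C]_(m, n)) : 'M[C]_(n, m) := (map_mx conjc M)^T.

Definition hermitian n (M : 'M[C]_n) : Prop := adjm M = M.

(* positive semidefinite (M ⪰ 0): Hermitian with x^H M x >= 0 for all x
   (order of C: 0 <= z means z is real and nonnegative) *)
Definition psd n (M : 'M[C]_n) : Prop :=
  hermitian M /\ forall x : 'cV[C]_n, 0 <= (adjm x *m M *m x) 0 0.

Definition qf n (g : 'cV[C]_n) (M : 'M[C]_n) : C := (adjm g *m M *m g) 0 0.

Definition log2 (x : R) : R := ln x / ln 2.

Definition posp (x : R) : R := Num.max x 0.

(* SINR gamma_k(W,S) (real-valued; numerator/denominator are real for
   Hermitian W,S, we take real parts) *)
Definition sinr L (g : 'cV[C]_L) (sigma : R) (W S : 'M[C]_L) : R :=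
  complex.Re (qf g W) / (complex.Re (qf g S) + sigma ^+ 2).

(* secrecy rate: min over k in K_EAV = {1,..,K+1} of
   (log2(1+gamma_0) - log2(1+gamma_k))^+ ; indices 0..K+1 are 'I_(K.+2) *)
Definition secrecy_rate L K (g : 'I_K.+2 -> 'cV[C]_L) (sigma : 'I_K.+2 -> R)
    (W S : 'M[C]_L) : R :=
  let e k := posp (log2 (1 + sinr (g ord0) (sigma ord0) W S)
                   - log2 (1 + sinr (g k) (sigma k) W S)) in
  \big[Num.min/e ord_max]_(k < K.+2 | k != ord0) e k.

Definition Rx N L (U : 'M[C]_(N, L)) (W S : 'M[C]_L) : 'M[C]_N :=
  U *m (W + S) *m adjm U.

Definition crb_den N (A Ad Rxm : 'M[C]_N) : R :=
  complex.Re (\tr (Ad *m Rxm *m adjm Ad)) * complex.Re (\tr (A *m Rxm *m adjm A))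
  - ComplexField.Normc.normc (\tr (A *m Rxm *m adjm Ad)) ^+ 2.

Definition crb N (sigs : R) (beta : C) (T : nat) (A Ad Rxm : 'M[C]_N) : R :=
  sigs ^+ 2 / (2 * ComplexField.Normc.normc beta ^+ 2 * T%:R)
  * (complex.Re (\tr (A *m Rxm *m adjm A)) / crb_den A Ad Rxm).

Definition feasible_SDR2 N L K (U : 'M[C]_(N, L)) (g : 'I_K.+2 -> 'cV[C]_L)
    (sigs : R) (beta : C) (T : nat) (A Adth Adr : 'M[C]_N)
    (Gth Gr Q P zeta : R) (W S : 'M[C]_L) : Prop :=
  [/\ hermitian W /\ hermitian S,
      (0 < crb_den A Adth (Rx U W S) /\ crb sigs beta T A Adth (Rx U W S) <= Gth)
      /\ (0 < crb_den A Adr (Rx U W S) /\ crb sigs beta T A Adr (Rx U W S) <= Gr),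
      (forall k : 'I_K.+2, (1 <= k <= K)%N -> Q <= zeta * complex.Re (qf (g k) (W + S))),
      complex.Re (\tr (W + S)) <= P &
      psd W /\ psd S].

Definition feasible_P2 N L K (U : 'M[C]_(N, L)) (g : 'I_K.+2 -> 'cV[C]_L)
    (sigs : R) (beta : C) (T : nat) (A Adth Adr : 'M[C]_N)
    (Gth Gr Q P zeta : R) (W S : 'M[C]_L) : Prop :=
  feasible_SDR2 U g sigs beta T A Adth Adr Gth Gr Q P zeta W S /\ (\rank W <= 1)%N.

End Defs.

(* Main.v *)
Require Import Defs.
From HB Require Import structures.
From mathcomp Require Import all_boot all_order all_algebra.
From mathcomp Require Import complex.
From mathcomp Require Import reals exp.
From mathcomp Require Import ring lra.
Import Order.TTheory GRing.Theory Num.Theory.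
Local Open Scope ring_scope.
Local Open Scope complex_scope.
Section S.
Variable R : realType.
Local Notation C := R[i].
Lemma adjmM m n p (A : 'M[C]_(m,n)) (B : 'M[C]_(n,p)) : adjm (A *m B) = adjm B *m adjm A.
Proof. by rewrite /adjm map_mxM trmx_mul. Qed.
Lemma adjmD m n (A B : 'M[C]_(m,n)) : adjm (A + B) = adjm A + adjm B.
Proof. by rewrite /adjm map_mxD linearD. Qed.
Lemma adjmB m n (A B : 'M[C]_(m,n)) : adjm (A - B) = adjm A - adjm B.
Proof. by rewrite /adjm map_mxB linearB. Qed.
Lemma adjmZ m n a (A : 'M[C]_(m,n)) : adjm (a *: A) = conjc a *: adjm A.
Proof. by rewrite /adjm map_mxZ linearZ. Qed.
Lemma adjmK m n (A : 'M[C]_(m,n)) : adjm (adjm A) = A.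
Proof. by apply/matrixP=> i j; rewrite /adjm !mxE conjcK. Qed.
Lemma adjm11 (A : 'M[C]_1) : adjm A 0 0 = conjc (A 0 0).
Proof. by rewrite /adjm !mxE. Qed.
Lemma mx11M m n (A : 'M[C]_(1,m)) (B : 'M[C]_(m,1)) (D : 'M[C]_(1,n)) (E : 'M[C]_(n,1)):
  (A *m B *m (D *m E)) 0 0 = (A *m B) 0 0 * (D *m E) 0 0.
Proof. by rewrite [in LHS]mxE big_ord1. Qed.
Variable n : nat.
Variable W : 'M[C]_n.
Definition B (x y : 'cV[C]_n) := (adjm x *m W *m y) 0 0.
Lemma BDr x y z : B x (y + z) = B x y + B x z.
Proof. by rewrite /B mulmxDr [LHS]mxE. Qed.
Lemma BBr x y z : B x (y - z) = B x y - B x z.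
Proof. by rewrite /B mulmxBr [LHS]mxE [X in _ + X]mxE. Qed.
Lemma BZr x a y : B x (a *: y) = a * B x y.
Proof. by rewrite /B -scalemxAr [LHS]mxE. Qed.
Lemma BBl x y z : B (y - z) x = B y x - B z x.
Proof. by rewrite /B adjmB !mulmxBl [LHS]mxE [X in _ + X]mxE. Qed.
Lemma BZl x a y : B (a *: y) x = conjc a * B y x.
Proof. by rewrite /B adjmZ -!scalemxAl [LHS]mxE. Qed.
Lemma BJ (x y : 'cV[C]_n) : Defs.hermitian W -> conjc (B x y) = B y x.
Proof. by move=> hW; rewrite /B -adjm11 !adjmM adjmK hW mulmxA. Qed.
Lemma ge0_conj {x : C} : 0 <= x -> conjc x = x.
Proof. by case: x => a b; rewrite lecE /= => /andP[/eqP -> _]; rewrite /conjc oppr0. Qed.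
Lemma CS (x g : 'cV[C]_n) : psd W -> 0 < B g g -> B g x * conjc (B g x) <= B g g * B x x.
Proof.
move=> [hW pW] cpos.
have := pW (B g g *: x - B g x *: g).
rewrite -/(B _ _) BBl !BBr !BZl !BZr (ge0_conj (ltW cpos)) (BJ _ _ hW).
have -> : B g g * (B g g * B x x) - B g g * (B g x * B x g) -
  (B x g * (B g g * B g x) - B x g * (B g x * B g g)) = B g g * (B g g * B x x - B g x * B x g).
  by ring.
by rewrite pmulr_rge0 // subr_ge0.
Qed.

End S.
Arguments B {R n}.
Arguments ge0_conj {R x}.
Set Implicit Arguments. Unset Strict Implicit.
Section S2.
Variable R : realType.
Local Notation C := R[i].
Variable n : nat.
Lemma BMD (M1 M2 : 'M[C]_n) x y : B (M1 + M2) x y = B M1 x y + B M2 x y.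
Proof. by rewrite /B mulmxDr mulmxDl [LHS]mxE. Qed.
Lemma BMB (M1 M2 : 'M[C]_n) x y : B (M1 - M2) x y = B M1 x y - B M2 x y.
Proof. by rewrite /B mulmxBr mulmxBl [LHS]mxE [X in _ + X]mxE. Qed.
Variables (W : 'M[C]_n) (h : 'cV[C]_n).
Hypothesis hW : Defs.hermitian W.
Hypothesis cpos : 0 < B W h h.
Definition Wo := (B W h h)^-1 *: (W *m h *m adjm h *m W).
Lemma BWo x y : B Wo x y = (B W h h)^-1 * (B W x h * B W h y).
Proof.
rewrite /B /Wo -scalemxAr -scalemxAl [LHS]mxE; congr (_ * _).
rewrite -mx11M !mulmxA //.
Qed.
Lemma Wo_herm : Defs.hermitian Wo.
Proof.
rewrite /Defs.hermitian /Wo adjmZ !adjmM adjmK hW conjc_inv (ge0_conj (ltW cpos)).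
by rewrite !mulmxA.
Qed.
Lemma BWoh : B Wo h h = B W h h.
Proof. by rewrite BWo mulrA mulVf ?mul1r // gt_eqF. Qed.
Lemma BWo_ge0 x : psd W -> 0 <= B Wo x x /\ B Wo x x <= B W x x.
Proof.
move=> pW; rewrite BWo -(@BJ _ _ _ h x hW); split.
  by apply: mulr_ge0; [rewrite invr_ge0 ltW | rewrite mulrC mulcJ_ge0].
by rewrite ler_pdivrMl // mulrC CS.
Qed.
Lemma Wo_psd : psd W -> psd Wo.
Proof. by move=> pW; split; [exact: Wo_herm | move=> x; case: (BWo_ge0 x pW)]. Qed.
Lemma Sopt_psd S : psd W -> psd S -> psd (W + S - Wo).
Proof.
move=> pW [hS pS]; split.
  by rewrite /Defs.hermitian adjmB adjmD hW hS Wo_herm.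
move=> x; have := BMB (W + S) Wo x x; rewrite /B => ->.
rewrite -!/(B _ _ _) BMD subr_ge0 -[B Wo x x]addr0.
have [_ ?] := BWo_ge0 x pW.
by rewrite lerD // pS.
Qed.
Lemma Wo_rank : \rank Wo = 1%N.
Proof.
apply/eqP; rewrite eqn_leq; apply/andP; split.
  rewrite /Wo; apply: leq_trans (mxrankS _) _; first exact: scalemx_sub.
  by rewrite -mulmxA -mulmxA mulmxA; apply: leq_trans (mxrankM_maxl _ _) (rank_leq_col _).
rewrite lt0n mxrank_eq0; apply/eqP => H0.
by move: cpos; rewrite -BWoh H0 /B mulmx0 mul0mx mxE ltxx.
Qed.
End S2.
Section S3.
Variable R : realType.
Local Notation C := R[i].
Lemma ReD (x y : C) : complex.Re (x + y) = complex.Re x + complex.Re y.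
Proof. by case: x; case: y. Qed.
Lemma ReB (x y : C) : complex.Re (x - y) = complex.Re x - complex.Re y.
Proof. by case: x; case: y. Qed.
Lemma Re_le (x y : C) : x <= y -> complex.Re x <= complex.Re y.
Proof. by rewrite lecE => /andP[]. Qed.
Lemma Re_ge0 (x : C) : 0 <= x -> 0 <= complex.Re x.
Proof. exact: Re_le. Qed.
Lemma frac_le (a a' s d : R) : 0 <= a' -> a' <= a -> 0 <= s -> 0 < d ->
  a' / (a + s - a' + d) <= a / (s + d).
Proof.
move=> ha' haa hs hd.
have hsd : 0 < s + d by rewrite ltr_wpDl.
have hD : s + d <= a + s - a' + d.
  lra.
apply: (@le_trans _ _ (a' / (s + d))).
  apply: ler_wpM2l => //; rewrite lef_pV2 ?posrE //; exact: lt_le_trans hD.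
by apply: ler_wpM2r => //; rewrite invr_ge0 ltW.
Qed.
Lemma posp_le (x y : R) : x <= y -> posp x <= posp y.
Proof. by move=> h; rewrite /posp ge_max !le_max h lexx !orbT. Qed.
Lemma log2_le (x y : R) : 0 < x -> x <= y -> log2 x <= log2 y.
Proof.
move=> hx hxy; rewrite /log2 ler_wpM2r //.
  by rewrite invr_ge0 ltW // ln_gt0 // ltr1n.
by rewrite ler_ln ?posrE // (lt_le_trans hx hxy).
Qed.
End S3.
Lemma min_le (R : realType) (a b c d : R) : a <= c -> b <= d -> Num.min a b <= Num.min c d.
Proof. by move=> h1 h2; rewrite le_min !ge_min h1 h2 orbT. Qed.

Theorem proposition1 (R : realType) (N L K T : nat)
    (U : 'M[R[i]]_(N, L)) (g : 'I_K.+2 -> 'cV[R[i]]_L) (sigma : 'I_K.+2 -> R)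
    (sigs : R) (beta : R[i]) (A Adth Adr : 'M[R[i]]_N)
    (Gth Gr Q P zeta : R) (Ws Ss : 'M[R[i]]_L) :
  (1 <= L)%N -> (L <= N)%N -> (1 <= K)%N -> (1 <= T)%N ->
  adjm U *m U = 1%:M ->
  (forall k, 0 < sigma k) -> 0 < sigs -> beta != 0 ->
  0 < Gth -> 0 < Gr -> 0 <= Q -> 0 < P -> 0 < zeta -> zeta <= 1 ->
  (* (Ws, Ss) is an optimal solution of (SDR2) *)
  feasible_SDR2 U g sigs beta T A Adth Adr Gth Gr Q P zeta Ws Ss ->
  (forall W S : 'M[R[i]]_L,
      feasible_SDR2 U g sigs beta T A Adth Adr Gth Gr Q P zeta W S ->
      secrecy_rate g sigma W S <= secrecy_rate g sigma Ws Ss) ->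
  0 < qf (g ord0) Ws ->
  let Wopt := (qf (g ord0) Ws)^-1 *: (Ws *m g ord0 *m adjm (g ord0) *m Ws) in
  let Sopt := Ws + Ss - Wopt in
  [/\ \rank Wopt = 1%N,
      feasible_P2 U g sigs beta T A Adth Adr Gth Gr Q P zeta Wopt Sopt,
      psd Sopt,
      secrecy_rate g sigma Wopt Sopt = secrecy_rate g sigma Ws Ss &
      (forall W S : 'M[R[i]]_L,
          feasible_SDR2 U g sigs beta T A Adth Adr Gth Gr Q P zeta W S ->
          secrecy_rate g sigma W S <= secrecy_rate g sigma Wopt Sopt) /\
      (forall W S : 'M[R[i]]_L,
          feasible_P2 U g sigs beta T A Adth Adr Gth Gr Q P zeta W S ->
          secrecy_rate g sigma W S <= secrecy_rate g sigma Wopt Sopt)].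
Proof.
move=> hL hLN hK hT hU hsig hsigs hbeta hGth hGr hQ hP hz hz1 Hfeas Hopt cpos Wopt Sopt.
have [[hW hS] Hcrb Heh Htr [pW pS]] := Hfeas.
have eW : Wopt = Wo Ws (g ord0) by [].
have eS : Sopt = Ws + Ss - Wopt by [].
have pSo : psd Sopt by exact: Sopt_psd.
have pWo : psd Wopt by exact: Wo_psd.
have hB0 : B Wopt (g ord0) (g ord0) = B Ws (g ord0) (g ord0) by exact: BWoh.
have hBk k : 0 <= B Wopt (g k) (g k) /\ B Wopt (g k) (g k) <= B Ws (g k) (g k).
  exact: BWo_ge0.
have hrank : \rank Wopt = 1%N by exact: Wo_rank.
clearbody Wopt Sopt.
have hsum : Wopt + Sopt = Ws + Ss by rewrite eS addrC subrK.
have FS : feasible_SDR2 U g sigs beta T A Adth Adr Gth Gr Q P zeta Wopt Sopt.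
  split.
  - by split; [exact: pWo.1 | exact: pSo.1].
  - by rewrite /Rx hsum; exact: Hcrb.
  - by move=> k hk; rewrite hsum; exact: Heh.
  - by rewrite hsum.
  - by split.
have qfS k : qf (g k) Sopt = qf (g k) Ws + qf (g k) Ss - qf (g k) Wopt.
  by rewrite eS /qf -!/(B _ _ _) BMB BMD.
have sinr0 : sinr (g ord0) (sigma ord0) Wopt Sopt = sinr (g ord0) (sigma ord0) Ws Ss.
  have h0 : qf (g ord0) Wopt = qf (g ord0) Ws by exact: hB0.
  by rewrite /sinr qfS h0 addrAC subrr add0r.
have sinrk k : 0 <= sinr (g k) (sigma k) Wopt Sopt /\
    sinr (g k) (sigma k) Wopt Sopt <= sinr (g k) (sigma k) Ws Ss.
  have [h1 h2] := hBk k.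
  have hd : 0 < sigma k ^+ 2 by rewrite exprn_gt0.
  have hs := Re_ge0 (pS.2 (g k)).
  have h1' := Re_ge0 h1.
  have h2' := Re_le h2.
  rewrite /sinr qfS ReB ReD; rewrite /qf -!/(B _ _ _) in hs *.
  split.
    apply: divr_ge0; first exact: h1'.
    lra.
  exact: frac_le.
have RATE : secrecy_rate g sigma Ws Ss <= secrecy_rate g sigma Wopt Sopt.
  rewrite /secrecy_rate sinr0.
  have e_le k : posp (log2 (1 + sinr (g ord0) (sigma ord0) Ws Ss)
                   - log2 (1 + sinr (g k) (sigma k) Ws Ss)) <=
                posp (log2 (1 + sinr (g ord0) (sigma ord0) Ws Ss)
                   - log2 (1 + sinr (g k) (sigma k) Wopt Sopt)).
    have [h1 h2] := sinrk k.
    apply: posp_le; apply: lerB; first exact: lexx.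
    apply: log2_le; last by rewrite lerD2l.
    by rewrite ltr_wpDr.
  apply: (big_ind2 (fun x y => x <= y)).
  - exact: e_le.
  - by move=> x1 x2 y1 y2; apply: min_le.
  - by move=> k _; exact: e_le.
have Req : secrecy_rate g sigma Wopt Sopt = secrecy_rate g sigma Ws Ss.
  by apply/le_anti/andP; split; [exact: Hopt FS | exact: RATE].
split.
- exact: hrank.
- by split; [exact: FS | rewrite hrank].
- exact: pSo.
- exact: Req.
- split; first by move=> W S HF; rewrite Req; exact: Hopt.
  by move=> W S [HF _]; rewrite Req; exact: Hopt.
Qed.
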